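(* Let $\theta$ be an infinite cardinal, let $\mathbb{P}$ be a $\theta$-directed poset, and let $\mathbb{P}^\ast$ be a $(<\theta)$-cofinal subposet of $\mathbb{P}$. Let $(I,\le)$ be a partial order and let $\langle p_i : i \in I\rangle$ be a diagram in $\mathbb{P}$ (i.e. $i \le j$ in $I$ implies $p_i \le p_j$). If for all $i \in I$, $|\{j \in I \mid j < i\}| < \theta$, then there exist a cofinal subset $I_0 \subseteq I$ and a diagram $\langle q_i : i \in I_0\rangle$ in $\mathbb{P}^\ast$ (i.e. $i\le j$ in $I_0$ implies $q_i \le^\ast q_j$) such that $p_i \le q_i$ for all $i \in I_0$.
   Context: A poset $\mathbb{P}$ is $\theta$-directed if every subset of cardinality $<\theta$ has an upper bound. A subposet of a poset $(\mathbb{P},\le)$ is a poset $(\mathbb{P}^\ast,\le^\ast)$ with $\mathbb{P}^\ast \subseteq \mathbb{P}$ and $x \le^\ast y$ implying $x \le y$. For a cardinal $\kappa$, $\mathbb{P}^\ast$ is $\kappa$-cofinal in $\mathbb{P}$ if for every $p \in \mathbb{P}$ and every sequence $\langle p_i : i < \kappa\rangle$ of elements of $\mathbb{P}^\ast$ with $p_i \le p$ for all $i$, there is $q \in \mathbb{P}^\ast$ with $p \le q$ and $p_i \le^\ast q$ for all $i<\kappa$. $\mathbb{P}^\ast$ is $(<\theta)$-cofinal if it is $\kappa$-cofinal for every cardinal $\kappa < \theta$. *)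

(* Defs.v *)
Set Implicit Arguments.

Definition card_le (A B : Type) : Prop :=
  exists f : A -> B, forall x y, f x = f y -> x = y.
Definition card_lt (A B : Type) : Prop := card_le A B /\ ~ card_le B A.

(* The cardinal theta is represented by a type Theta of that cardinality. *)
Definition infinite_type (Theta : Type) : Prop := card_le nat Theta.

Definition is_poset_on (T : Type) (S : T -> Prop) (R : T -> T -> Prop) : Prop :=
  (forall x, S x -> R x x) /\
  (forall x y, S x -> S y -> R x y -> R y x -> x = y) /\
  (forall x y z, S x -> S y -> S z -> R x y -> R y z -> R x z).

Definition is_poset (T : Type) (R : T -> T -> Prop) : Prop :=
  is_poset_on (fun _ => True) R.

Definition directed (Theta : Type) (P : Type) (le : P -> P -> Prop) : Prop :=
  forall A : P -> Prop, card_lt {x : P | A x} Theta ->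
    exists u : P, forall x, A x -> le x u.

Definition subposet (P : Type) (le : P -> P -> Prop)
  (Pstar : P -> Prop) (lestar : P -> P -> Prop) : Prop :=
  is_poset_on Pstar lestar /\
  (forall x y, Pstar x -> Pstar y -> lestar x y -> le x y).

(* kappa-cofinal, the cardinal kappa being represented by an index type K. *)
Definition kappa_cofinal (K : Type) (P : Type) (le : P -> P -> Prop)
  (Pstar : P -> Prop) (lestar : P -> P -> Prop) : Prop :=
  forall (p : P) (ps : K -> P),
    (forall i, Pstar (ps i)) -> (forall i, le (ps i) p) ->
    exists q : P, Pstar q /\ le p q /\ forall i, lestar (ps i) q.

Definition lt_cofinal (Theta : Type) (P : Type) (le : P -> P -> Prop)
  (Pstar : P -> Prop) (lestar : P -> P -> Prop) : Prop :=
  forall K : Type, card_lt K Theta -> kappa_cofinal K le Pstar lestar.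

(* Main.v *)
Require Import Defs.
From Stdlib Require Import Classical ClassicalEpsilon ProofIrrelevance.
From mathcomp Require Import all_boot.
From mathcomp Require Import boolp classical_sets.
Set Bullet Behavior "Strict Subproofs".
Set Asymmetric Patterns.
Local Open Scope classical_set_scope.

Lemma card_le_trans (A B C : Type) : card_le A B -> card_le B C -> card_le A C.
Proof.
  intros [f Hf] [g Hg]. exists (fun x => g (f x)). intros x y H. auto.
Qed.

Lemma card_lt_le (A B C : Type) : card_le A B -> card_lt B C -> card_lt A C.
Proof.
  intros HAB [HBC HnCB]. split.
  - eapply card_le_trans; eauto.
  - intro HCA. apply HnCB. eapply card_le_trans; eauto.
Qed.

Lemma card_lt_two (Theta P : Type) (HT : infinite_type Theta) (a b : P) :
  card_lt {x : P | x = a \/ x = b} Theta.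
Proof.
  destruct HT as [g Hg]. split.
  - exists (fun x => if excluded_middle_informative (proj1_sig x = a) then g 0%nat else g 1%nat).
    intros [x Hx] [y Hy]; simpl.
    destruct (excluded_middle_informative (x = a)) as [ea|na];
    destruct (excluded_middle_informative (y = a)) as [eb|nb]; intro H.
    + subst. f_equal; apply proof_irrelevance.
    + apply Hg in H. discriminate.
    + apply Hg in H. discriminate.
    + destruct Hx as [Hx|Hx]; [contradiction|]. destruct Hy as [Hy|Hy]; [contradiction|].
      subst x y. f_equal; apply proof_irrelevance.
  - intro H. assert (H2 : card_le nat {x : P | x = a \/ x = b}) by (eapply card_le_trans; [exists g; exact Hg | exact H]).
    destruct H2 as [h Hh].
    assert (E : forall m n, proj1_sig (h m) = proj1_sig (h n) -> m = n).
    { intros m n E. apply Hh. destruct (h m), (h n). simpl in E. subst.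
      f_equal; apply proof_irrelevance. }
    destruct (proj2_sig (h 0%nat)) as [E0|E0];
    destruct (proj2_sig (h 1%nat)) as [E1|E1];
    destruct (proj2_sig (h 2%nat)) as [E2|E2];
    first [ assert (0 = 1)%nat by (apply E; congruence); discriminate
          | assert (0 = 2)%nat by (apply E; congruence); discriminate
          | assert (1 = 2)%nat by (apply E; congruence); discriminate ].
Qed.

Theorem theorem3p5
  (Theta : Type) (HTheta : infinite_type Theta)
  (P : Type) (le : P -> P -> Prop) (HP : is_poset le)
  (Hdir : directed Theta le)
  (Pstar : P -> Prop) (lestar : P -> P -> Prop)
  (Hsub : subposet le Pstar lestar)
  (Hcof : lt_cofinal Theta le Pstar lestar)
  (I : Type) (leI : I -> I -> Prop) (HI : is_poset leI)
  (p : I -> P) (Hdiag : forall i j, leI i j -> le (p i) (p j))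
  (Hsmall : forall i, card_lt {j : I | leI j i /\ j <> i} Theta) :
  exists (I0 : I -> Prop) (q : I -> P),
    (forall i, exists j, I0 j /\ leI i j) /\
    (forall i, I0 i -> Pstar (q i)) /\
    (forall i j, I0 i -> I0 j -> leI i j -> lestar (q i) (q j)) /\
    (forall i, I0 i -> le (p i) (q i)).
Proof.
  destruct HP as [_ [_ leT]].
  destruct Hsub as [[lsR _] _].
  pose Good := fun G : set (I * P) =>
    (forall i a b, G (i, a) -> G (i, b) -> a = b) /\
    (forall i a, G (i, a) -> Pstar a /\ le (p i) a) /\
    (forall i j a b, G (i, a) -> G (j, b) -> leI i j -> lestar a b).
  assert (HZ : forall F : set (set (I * P)), F `<=` Good -> total_on F subset ->
      Good (\bigcup_(X in F) X)).
  { intros F HF Htot. split; [|split].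
    - intros i a b [X FX Xa] [Y FY Yb].
      destruct (Htot X Y FX FY) as [S|S].
      + apply (proj1 (HF Y FY) i); auto.
      + apply (proj1 (HF X FX) i); auto.
    - intros i a [X FX Xa]. apply (proj1 (proj2 (HF X FX)) i); auto.
    - intros i j a b [X FX Xa] [Y FY Yb].
      destruct (Htot X Y FX FY) as [S|S].
      + apply (proj2 (proj2 (HF Y FY)) i j); auto.
      + apply (proj2 (proj2 (HF X FX)) i j); auto. }
  destruct (Zorn_bigcup HZ) as [A [[Afun [Aval Adiag]] Amax]].
  pose I0 := fun i => exists a, A (i, a).
  pose q := fun i => match excluded_middle_informative (I0 i) with
                     | left H => proj1_sig (ClassicalEpsilon.constructive_indefinite_description _ H)
                     | right _ => p i end.
  assert (Hq : forall i, I0 i -> A (i, q i)).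
  { intros i Hi. unfold q. destruct (excluded_middle_informative (I0 i)) as [H|H].
    - exact (proj2_sig (ClassicalEpsilon.constructive_indefinite_description _ H)).
    - contradiction. }
  exists I0, q. split; [|split; [|split]].
  - intro i. apply NNPP. intro Hn.
    assert (Hni : ~ I0 i) by (intro H; apply Hn; exists i; split; [exact H| apply (proj1 HI); exact Logic.I]).
    pose K := {ja : I * P | A ja /\ leI (fst ja) i}.
    assert (HK : card_lt K Theta).
    { apply (@card_lt_le _ {j : I | leI j i /\ j <> i} Theta); [|apply Hsmall].
      unshelve eexists.
      - intros [[j a] [Ha Hj]]. exists j. split; [exact Hj|].
        intro E; subst j. apply Hni. exists a. exact Ha.
      - intros [[j a] [Ha Hj]] [[j' a'] [Ha' Hj']] E. simpl in E.
        injection E as E. subst j'. assert (a = a') by (apply (Afun j); auto). subst a'.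
        f_equal; apply proof_irrelevance. }
    pose ps := fun k : K => snd (proj1_sig k).
    pose A1 := fun x => exists k : K, x = ps k.
    assert (HA1 : card_lt {x | A1 x} Theta).
    { apply (@card_lt_le _ K Theta); [|exact HK].
      exists (fun x : {x | A1 x} => proj1_sig (ClassicalEpsilon.constructive_indefinite_description _ (proj2_sig x))).
      intros [x Hx] [y Hy]; simpl.
      destruct (ClassicalEpsilon.constructive_indefinite_description _ Hx) as [k Ek].
      destruct (ClassicalEpsilon.constructive_indefinite_description _ Hy) as [k' Ek']. simpl.
      intro E. subst k' x y. f_equal; apply proof_irrelevance. }
    destruct (Hdir _ HA1) as [u1 Hu1].
    destruct (Hdir _ (@card_lt_two Theta P HTheta u1 (p i))) as [u2 Hu2].
    assert (Hu2a : le u1 u2) by (apply Hu2; auto).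
    assert (Hu2b : le (p i) u2) by (apply Hu2; auto).
    assert (Hps : forall k, le (ps k) u2).
    { intro k. apply (leT _ u1); auto. apply Hu1. exists k; reflexivity. }
    assert (HpsS : forall k, Pstar (ps k)).
    { intros [[j a] [Ha Hj]]. exact (proj1 (Aval j a Ha)). }
    destruct (Hcof K HK u2 ps HpsS Hps) as [qi [Sqi [Lqi Rqi]]].
    pose B := fun ja : I * P => A ja \/ ja = (i, qi).
    apply (Amax B).
    + split.
      * intros x Hx. left. exact Hx.
      * intro H. apply Hni. exists qi. apply H. right; reflexivity.
    + split; [|split].
      * intros j a b [Ha|Ha] [Hb|Hb].
        -- apply (Afun j); auto.
        -- injection Hb as -> ->. exfalso; apply Hni; exists a; auto.
        -- injection Ha as -> ->. exfalso; apply Hni; exists b; auto.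
        -- injection Ha as -> ->. injection Hb; intros; subst. reflexivity.
      * intros j a [Ha|Ha].
        -- apply Aval; auto.
        -- injection Ha as -> ->. split; auto. apply (leT _ u2); auto.
      * intros j j' a b [Ha|Ha] [Hb|Hb] Hjj.
        -- apply (Adiag j j'); auto.
        -- injection Hb as -> ->.
           exact (Rqi (exist _ (j, a) (conj Ha Hjj))).
        -- injection Ha as -> ->. exfalso. apply Hn. exists j'. split; auto. exists b; auto.
        -- injection Ha as -> ->. injection Hb; intros; subst. apply lsR; auto.
  - intros i Hi. exact (proj1 (Aval _ _ (Hq i Hi))).
  - intros i j Hi Hj Hij. apply (Adiag i j); auto.
  - intros i Hi. exact (proj2 (Aval _ _ (Hq i Hi))).
Qed.
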